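(* Let $S$ be a set of $n$ pairwise disjoint line segments in the plane, $1\le k\le n-1$, and $s\in S$. Let $V_k(s,S)=\bigcup_{H\subset S,\ |H|=k,\ s\in H}\overline{V_k(H,S)}$. Then $s\subseteq V_k(s,S)$ and $V_k(s,S)$ is weakly star-shaped with respect to $s$: for every point $x\in V_k(s,S)$ there exists a point $y\in s$ such that the whole segment $xy$ is contained in $V_k(s,S)$.
   Context: Distances are Euclidean: $d(x,s)=\min_{q\in s}d(x,q)$. $V_k(H,S)=\{x : d(x,s')<d(x,t)\ \forall s'\in H,\ \forall t\in S\setminus H\}$, and $\overline{X}$ denotes topological closure. *)

(* Defs.v *)
From Stdlib Require Import Reals Lra List ClassicalEpsilon.
Import ListNotations.
Open Scope R_scope.

Definition point : Type := (R * R)%type.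

Definition dist2 (p q : point) : R :=
  sqrt ((fst p - fst q)^2 + (snd p - snd q)^2).

Definition segment : Type := (point * point)%type.

Definition on_seg (a b : point) (p : point) : Prop :=
  exists t : R, 0 <= t <= 1 /\
    p = (fst a + t * (fst b - fst a), snd a + t * (snd b - snd a)).

Definition in_seg (s : segment) (p : point) : Prop := on_seg (fst s) (snd s) p.

(* d(x,s) = min_{q in s} d(x,q), chosen via Hilbert's epsilon among the
   values r realising the minimum (the minimum exists since s is compact). *)
Definition is_min_dist (x : point) (s : segment) (r : R) : Prop :=
  (exists q, in_seg s q /\ r = dist2 x q) /\
  (forall q, in_seg s q -> r <= dist2 x q).

Definition dist_seg (x : point) (s : segment) : R :=
  epsilon (inhabits 0) (is_min_dist x s).

(* S = {segs 0, ..., segs (n-1)}; subsets H are lists of indices.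
   V_k(H,S) = { x | d(x,s') < d(x,t) for all s' in H, t in S \ H }. *)
Definition Vk_H (segs : nat -> segment) (n : nat) (H : list nat) (x : point) : Prop :=
  forall i j, In i H -> (j < n)%nat -> ~ In j H ->
    dist_seg x (segs i) < dist_seg x (segs j).

Definition closure (A : point -> Prop) (x : point) : Prop :=
  forall eps, 0 < eps -> exists y, A y /\ dist2 x y < eps.

Definition ksubset (n k : nat) (H : list nat) : Prop :=
  NoDup H /\ length H = k /\ (forall i, In i H -> (i < n)%nat).

Definition Vk_s (segs : nat -> segment) (n k i0 : nat) (x : point) : Prop :=
  exists H, ksubset n k H /\ In i0 H /\ closure (Vk_H segs n H) x.

(* Main.v *)
Require Import Defs.
From Stdlib Require Import Reals Rgeom List Lra Lia Classical ClassicalEpsilon.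
Import ListNotations.
Open Scope R_scope.

Lemma dist2_sym p q : dist2 p q = dist2 q p.
Proof. unfold dist2; f_equal; ring. Qed.
Lemma dist2_nonneg p q : 0 <= dist2 p q.
Proof. apply sqrt_pos. Qed.
Lemma dist2_refl p : dist2 p p = 0.
Proof. unfold dist2. replace ((fst p - fst p) ^ 2 + (snd p - snd p) ^ 2) with 0 by ring. apply sqrt_0. Qed.
Lemma sumsq0 a b : a*a + b*b = 0 -> a = 0 /\ b = 0.
Proof.
  intro H. pose proof (Rle_0_sqr a); pose proof (Rle_0_sqr b); unfold Rsqr in *.
  assert (a*a = 0) by lra. assert (b*b=0) by lra.
  apply Rmult_integral in H2; apply Rmult_integral in H3. split; destruct H2, H3; auto.
Qed.
Lemma dist2_eq0 p q : dist2 p q = 0 -> p = q.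
Proof.
  destruct p as [a b], q as [c d]; unfold dist2; simpl; intro H.
  pose proof (Rle_0_sqr (a-c)); pose proof (Rle_0_sqr (b-d)); unfold Rsqr in *.
  apply sqrt_eq_0 in H; [|lra]. rewrite !Rmult_1_r in H. apply sumsq0 in H. f_equal; lra.
Qed.
Lemma dist2_tri p q r : dist2 p r <= dist2 p q + dist2 q r.
Proof.
  assert (E: forall u v, dist2 u v = dist_euc (fst u) (snd u) (fst v) (snd v)).
  { intros; unfold dist2, dist_euc, Rsqr; f_equal; ring. }
  rewrite !E; apply triangle.
Qed.

Definition lin (x y : point) (t : R) : point :=
  (fst x + t * (fst y - fst x), snd x + t * (snd y - snd x)).

Lemma dist_lin1 x y t : 0 <= t -> dist2 x (lin x y t) = t * dist2 x y.
Proof.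
  intro Ht; unfold dist2, lin; cbn [fst snd].
  replace ((fst x - (fst x + t * (fst y - fst x))) ^ 2 + (snd x - (snd x + t * (snd y - snd x))) ^ 2)
    with (t^2 * ((fst x - fst y) ^ 2 + (snd x - snd y) ^ 2)) by ring.
  rewrite sqrt_mult_alt by nra. rewrite sqrt_pow2 by lra. reflexivity.
Qed.
Lemma dist_lin2 x y t : t <= 1 -> dist2 (lin x y t) y = (1 - t) * dist2 x y.
Proof.
  intro Ht; unfold dist2, lin; cbn [fst snd].
  replace ((fst x + t * (fst y - fst x) - fst y) ^ 2 + (snd x + t * (snd y - snd x) - snd y) ^ 2)
    with ((1-t)^2 * ((fst x - fst y) ^ 2 + (snd x - snd y) ^ 2)) by ring.
  rewrite sqrt_mult_alt by nra. rewrite sqrt_pow2 by lra. reflexivity.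
Qed.

Lemma min_exists x s : exists r, is_min_dist x s r.
Proof.
  destruct s as [a b].
  set (g := fun t => (fst x - (fst a + t * (fst b - fst a)))^2 + (snd x - (snd a + t * (snd b - snd a)))^2).
  assert (Hc: forall c, 0 <= c <= 1 -> continuity_pt g c) by (intros; unfold g; reg).
  destruct (continuity_ab_min g 0 1 ltac:(lra) Hc) as [m [Hm Hm01]].
  exists (sqrt (g m)). split.
  - exists (lin a b m). split. exists m; split; auto. reflexivity.
  - intros q [t [Ht ->]]. unfold dist2; cbn [fst snd]. apply sqrt_le_1_alt. apply (Hm t Ht).
Qed.

Lemma ds_spec x s : is_min_dist x s (dist_seg x s).
Proof.
  unfold dist_seg. apply epsilon_spec. apply min_exists.
Qed.
Lemma ds_le x s q : in_seg s q -> dist_seg x s <= dist2 x q.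
Proof. intro H; apply (proj2 (ds_spec x s)); auto. Qed.
Lemma ds_att x s : exists q, in_seg s q /\ dist_seg x s = dist2 x q.
Proof. apply (proj1 (ds_spec x s)). Qed.
Lemma ds_nonneg x s : 0 <= dist_seg x s.
Proof. destruct (ds_att x s) as [q [_ ->]]; apply dist2_nonneg. Qed.
Lemma ds_lip x z s : dist_seg x s <= dist_seg z s + dist2 x z.
Proof.
  destruct (ds_att z s) as [q [Hq E]]. rewrite E.
  eapply Rle_trans. apply (ds_le x s q Hq). rewrite Rplus_comm. apply dist2_tri.
Qed.
Lemma ds_zero x s : in_seg s x -> dist_seg x s = 0.
Proof. intro H. pose proof (ds_le x s x H). rewrite dist2_refl in H0. pose proof (ds_nonneg x s). lra. Qed.
Lemma ds_zero_inv x s : dist_seg x s = 0 -> in_seg s x.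
Proof. destruct (ds_att x s) as [q [Hq E]]. intro H. rewrite H in E. symmetry in E. apply dist2_eq0 in E. subst; auto. Qed.

Lemma sq_dist a b r : dist2 a b = r -> (fst a - fst b)^2 + (snd a - snd b)^2 = r^2.
Proof.
  intro H; rewrite <- H; unfold dist2. rewrite pow2_sqrt; auto.
  pose proof (pow2_ge_0 (fst a - fst b)); pose proof (pow2_ge_0 (snd a - snd b)); lra.
Qed.
Lemma rigid x y p t r : 0 < t <= 1 -> dist2 x y = r -> r <= dist2 x p ->
  dist2 (lin x y t) p <= (1 - t) * r -> p = y.
Proof.
  intros Ht E1 E2 E3.
  assert (Hr: 0 <= r) by (rewrite <- E1; apply dist2_nonneg).
  pose proof (dist2_tri x (lin x y t) p) as T. rewrite dist_lin1 in T by lra.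
  assert (A1: dist2 x p = r) by nra.
  assert (A2: dist2 (lin x y t) p = (1 - t) * r) by nra.
  apply sq_dist in E1. apply sq_dist in A1. apply sq_dist in A2.
  destruct x as [x1 x2], y as [y1 y2], p as [p1 p2]. unfold lin in *; cbn [fst snd] in *.
  assert (D: (p1 - x1)*(y1-x1) + (p2-x2)*(y2-x2) = r^2).
  { assert (t * (2*((p1 - x1)*(y1-x1) + (p2-x2)*(y2-x2)) - 2 * r^2) = 0) by nra.
    apply Rmult_integral in H; destruct H; nra. }
  assert ((p1 - y1)*(p1-y1) + (p2-y2)*(p2-y2) = 0) by nra.
  apply sumsq0 in H. f_equal; lra.
Qed.

Lemma pair_sep (si sj : segment) :
  (forall p, ~ (in_seg si p /\ in_seg sj p)) ->
  forall z eps, 0 < eps -> exists w, dist2 z w < eps /\ dist_seg w si <> dist_seg w sj.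
Proof.
  intros Hd z eps He.
  destruct (Req_dec (dist_seg z si) (dist_seg z sj)) as [Eq|Ne].
  2:{ exists z; rewrite dist2_refl; auto. }
  set (r := dist_seg z si).
  assert (Hr: 0 < r).
  { destruct (Rle_lt_or_eq_dec 0 r (ds_nonneg _ _)) as [h|h]; auto.
    exfalso; apply (Hd z); split; apply ds_zero_inv; unfold r in h; lra. }
  destruct (ds_att z si) as [q [Hq Eq1]].
  set (l := Rmin (eps / (2*r)) (1/2)).
  assert (Hl0: 0 < l) by (unfold l; apply Rmin_glb_lt; [apply Rdiv_lt_0_compat|]; lra).
  assert (Hl1: l <= 1/2) by apply Rmin_r.
  assert (Hl2: l <= eps / (2*r)) by apply Rmin_l.
  exists (lin z q l). split.
  - rewrite dist_lin1 by lra. rewrite <- Eq1. fold r.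
    assert (l * r <= eps/2).
    { apply Rmult_le_compat_r with (r:=r) in Hl2; [|lra].
      replace (eps / (2*r) * r) with (eps/2) in Hl2 by (field; lra). auto. }
    lra.
  - intro E.
    assert (B1: dist_seg (lin z q l) si <= (1 - l) * r).
    { eapply Rle_trans. apply ds_le; eauto. rewrite dist_lin2 by lra. rewrite <- Eq1. right; reflexivity. }
    destruct (ds_att (lin z q l) sj) as [q' [Hq' Eq2]].
    assert (q' = q).
    { apply (rigid z q q' l r); [lra| symmetry; auto | |].
      - unfold r; rewrite Eq. apply ds_le; auto.
      - rewrite <- Eq2, <- E. auto. }
    subst q'. apply (Hd q); auto.
Qed.

Lemma gen_pairs (segs : nat -> segment) (L : list (nat * nat)) :
  (forall pr, In pr L -> forall p, ~ (in_seg (segs (fst pr)) p /\ in_seg (segs (snd pr)) p)) ->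
  forall z eps, 0 < eps -> exists w, dist2 z w < eps /\
    forall pr, In pr L -> dist_seg w (segs (fst pr)) <> dist_seg w (segs (snd pr)).
Proof.
  induction L as [|a L IH]; intros HL z eps He.
  - exists z; rewrite dist2_refl; split; [lra| intros pr []].
  - destruct (pair_sep (segs (fst a)) (segs (snd a)) (HL a (or_introl eq_refl)) z (eps/2)) as [w1 [Hw1 N1]]; [lra|].
    set (g := Rabs (dist_seg w1 (segs (fst a)) - dist_seg w1 (segs (snd a)))).
    assert (Hg: 0 < g) by (apply Rabs_pos_lt; lra).
    destruct (IH (fun pr H => HL pr (or_intror H)) w1 (Rmin (eps/2) (g/2))) as [w [Hw N]].
    { apply Rmin_glb_lt; lra. }
    exists w. split.
    + pose proof (dist2_tri z w1 w). pose proof (Rmin_l (eps/2) (g/2)). lra.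
    + intros pr [->|Hin]; [|auto].
      pose proof (Rmin_r (eps/2) (g/2)).
      pose proof (ds_lip w1 w (segs (fst pr))). pose proof (ds_lip w w1 (segs (fst pr))).
      pose proof (ds_lip w1 w (segs (snd pr))). pose proof (ds_lip w w1 (segs (snd pr))).
      rewrite (dist2_sym w w1) in *. unfold g in *.
      intro E. rewrite E in *.
      destruct (Rcase_abs (dist_seg w1 (segs (fst pr)) - dist_seg w1 (segs (snd pr)))) as [c|c];
        [rewrite Rabs_left in * by lra | rewrite Rabs_right in * by lra]; lra.
Qed.

Lemma persist (segs : nat -> segment) (n i0 : nat) (L : list nat) (z : point) :
  (forall j, (j < n)%nat -> j <> i0 -> ~ In j L -> dist_seg z (segs i0) < dist_seg z (segs j)) ->
  exists d, 0 < d /\ forall w, dist2 z w < d ->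
    forall j, (j < n)%nat -> j <> i0 -> ~ In j L -> dist_seg w (segs i0) < dist_seg w (segs j).
Proof.
  intro H.
  assert (Hm: forall m, (m <= n)%nat -> exists d, 0 < d /\ forall w, dist2 z w < d ->
    forall j, (j < m)%nat -> j <> i0 -> ~ In j L -> dist_seg w (segs i0) < dist_seg w (segs j)).
  { induction m as [|m IH]; intro Hmn.
    - exists 1; split; [lra|]. intros; lia.
    - destruct (IH ltac:(lia)) as [d [Hd P]].
      destruct (classic (m <> i0 /\ ~ In m L)) as [[C1 C2]|C].
      + set (g := dist_seg z (segs m) - dist_seg z (segs i0)).
        assert (Hg: 0 < g) by (unfold g; pose proof (H m ltac:(lia) C1 C2); lra).
        exists (Rmin d (g/2)). split; [apply Rmin_glb_lt; lra|].
        intros w Hw j Hj Hj1 Hj2. pose proof (Rmin_l d (g/2)); pose proof (Rmin_r d (g/2)).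
        destruct (Nat.eq_dec j m) as [->|Ne].
        * pose proof (ds_lip z w (segs m)). pose proof (ds_lip w z (segs i0)).
          rewrite (dist2_sym w z) in *. unfold g in *. lra.
        * apply P; auto; lra || lia.
      + exists d; split; auto. intros w Hw j Hj Hj1 Hj2.
        destruct (Nat.eq_dec j m) as [->|Ne]; [tauto|]. apply P; auto; lia. }
  destruct (Hm n (le_n n)) as [d [Hd P]]. exists d; split; auto.
Qed.

Lemma argmin (f : nat -> R) (l : list nat) : l <> [] -> exists m, In m l /\ forall j, In j l -> f m <= f j.
Proof.
  induction l as [|a l IH]; intro Hl; [congruence|].
  destruct l as [|b l'].
  - exists a; split; [left; auto|]. intros j [<-|[]]; lra.
  - destruct (IH ltac:(congruence)) as [m [Hm P]].
    destruct (Rle_dec (f a) (f m)).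
    + exists a; split; [left; auto|]. intros j [<-|Hj]; [lra|]. specialize (P j Hj); lra.
    + exists m; split; [right; auto|]. intros j [<-|Hj]; [lra|auto].
Qed.

Lemma greedy (f : nat -> R) (n k : nat) :
  (forall i j, (i < n)%nat -> (j < n)%nat -> i <> j -> f i <> f j) -> (k <= n)%nat ->
  exists H, NoDup H /\ length H = k /\ (forall i, In i H -> (i < n)%nat) /\
    (forall i j, In i H -> (j < n)%nat -> ~ In j H -> f i < f j).
Proof.
  intro Hinj. induction k as [|k IH]; intro Hk.
  - exists []; repeat split; try constructor; intros; simpl in *; tauto.
  - destruct (IH ltac:(lia)) as [H [ND [Len [Bd Low]]]].
    set (C := filter (fun j => if in_dec Nat.eq_dec j H then false else true) (seq 0 n)).
    assert (CC: forall j, In j C <-> (j < n)%nat /\ ~ In j H).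
    { intro j; unfold C; rewrite filter_In, in_seq. destruct (in_dec Nat.eq_dec j H); split; intuition (try lia; try congruence). }
    assert (Cne: C <> []).
    { intro E. assert (incl (seq 0 n) H).
      { intros j Hj. rewrite in_seq in Hj. destruct (in_dec Nat.eq_dec j H); auto.
        assert (In j C) by (apply CC; split; [lia|auto]). rewrite E in H0; destruct H0. }
      pose proof (NoDup_incl_length (seq_NoDup n 0) H0). rewrite length_seq in H1. lia. }
    destruct (argmin f C Cne) as [m [Hm Pm]]. apply CC in Hm as [Hmn HmH].
    exists (m :: H). repeat split.
    + constructor; auto.
    + simpl; lia.
    + intros i [<-|Hi]; auto.
    + intros i j Hi Hj Hnj. assert (~ In j H) by (intro; apply Hnj; right; auto).
      assert (j <> m) by (intro; apply Hnj; left; auto).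
      destruct Hi as [->|Hi]; [|auto].
      specialize (Pm j (proj2 (CC j) (conj Hj H0))).
      assert (f i <> f j) by (apply Hinj; auto). lra.
Qed.

Fixpoint subseqs (l : list nat) : list (list nat) :=
  match l with
  | [] => [[]]
  | a :: l' => map (cons a) (subseqs l') ++ subseqs l'
  end.

Lemma filter_subseqs (g : nat -> bool) l : In (filter g l) (subseqs l).
Proof.
  induction l as [|a l IH]; simpl; auto.
  destruct (g a); apply in_or_app; [left; apply in_map; auto| right; auto].
Qed.

Lemma pigeon {A : Type} (F : list A) (P : R -> A -> Prop) :
  (forall e e' H, 0 < e <= e' -> P e H -> P e' H) ->
  (forall e, 0 < e -> exists H, In H F /\ P e H) ->
  exists H, In H F /\ forall e, 0 < e -> P e H.
Proof.
  intro Mono. induction F as [|a F IH]; intro Hall.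
  - destruct (Hall 1 ltac:(lra)) as [H [[] _]].
  - destruct (classic (forall e, 0 < e -> P e a)) as [Ha|Ha].
    + exists a; split; [left|]; auto.
    + apply not_all_ex_not in Ha as [e0 He0]. apply imply_to_and in He0 as [He0 Ne0].
      destruct IH as [H [HF PH]].
      * intros e He. destruct (Hall (Rmin e e0) ltac:(apply Rmin_glb_lt; lra)) as [H [[<-|HF] PH]].
        -- exfalso; apply Ne0; apply (Mono _ _ _ (conj (Rmin_glb_lt _ _ _ He He0) (Rmin_r e e0)) PH).
        -- exists H; split; auto. apply (Mono _ _ _ (conj (Rmin_glb_lt _ _ _ He He0) (Rmin_l e e0)) PH).
      * exists H; split; [right|]; auto.
Qed.

Definition pairs (n : nat) : list (nat * nat) :=
  filter (fun p => negb (Nat.eqb (fst p) (snd p))) (list_prod (seq 0 n) (seq 0 n)).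

Lemma pairs_In n i j : (i < n)%nat -> (j < n)%nat -> i <> j -> In (i, j) (pairs n).
Proof.
  intros. unfold pairs. apply filter_In. split.
  - apply in_prod; apply in_seq; lia.
  - simpl. apply Nat.eqb_neq in H1. rewrite H1. reflexivity.
Qed.
Lemma pairs_In_inv n pr : In pr (pairs n) -> (fst pr < n)%nat /\ (snd pr < n)%nat /\ fst pr <> snd pr.
Proof.
  unfold pairs. rewrite filter_In. destruct pr as [i j]. rewrite in_prod_iff, !in_seq. simpl.
  intros [[A1 A2] E]. destruct (Nat.eqb_spec i j); simpl in E; [discriminate|]. repeat split; lia || auto.
Qed.

Lemma key (segs : nat -> segment) (n k i0 : nat)
  (Hdisj : forall i j, (i < n)%nat -> (j < n)%nat -> i <> j ->
            forall p, ~ (in_seg (segs i) p /\ in_seg (segs j) p))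
  (Hkn : (k <= n)%nat) (Hi0 : (i0 < n)%nat) (z : point) (L : list nat) :
  (length L < k)%nat ->
  (forall j, (j < n)%nat -> j <> i0 -> ~ In j L -> dist_seg z (segs i0) < dist_seg z (segs j)) ->
  Vk_s segs n k i0 z.
Proof.
  intros HL Hz.
  destruct (persist segs n i0 L z Hz) as [d [Hd Pd]].
  set (P := fun e H => ksubset n k H /\ In i0 H /\ exists y, Vk_H segs n H y /\ dist2 z y < e).
  assert (Mono: forall e e' H, 0 < e <= e' -> P e H -> P e' H).
  { intros e e' H He [A1 [A2 [y [Y1 Y2]]]]. split; auto. split; auto. exists y; split; auto; lra. }
  assert (All: forall e, 0 < e -> exists H, In H (subseqs (seq 0 n)) /\ P e H).
  { intros e He.
    destruct (gen_pairs segs (pairs n)) with (z := z) (eps := Rmin e d) as [w [Hw Nw]].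
    { intros pr Hpr. apply pairs_In_inv in Hpr as [A1 [A2 A3]]. apply Hdisj; auto. }
    { apply Rmin_glb_lt; auto. }
    set (f := fun i => dist_seg w (segs i)).
    destruct (greedy f n k) as [H0 [ND [Len [Bd Low]]]]; auto.
    { intros i j Hi Hj Hij. apply (Nw (i, j)). apply pairs_In; auto. }
    assert (I0: In i0 H0).
    { apply NNPP; intro Ni0.
      assert (incl H0 L).
      { intros i Hi. apply NNPP; intro NiL.
        assert (i <> i0) by (intro; subst; tauto).
        pose proof (Low i i0 Hi Hi0 Ni0).
        pose proof (Pd w ltac:(pose proof (Rmin_r e d); lra) i (Bd i Hi) H NiL). unfold f in *. lra. }
      pose proof (NoDup_incl_length ND H). lia. }
    set (g := fun j => if in_dec Nat.eq_dec j H0 then true else false).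
    assert (GI: forall j, In j (filter g (seq 0 n)) <-> In j H0).
    { intro j. rewrite filter_In, in_seq. unfold g. destruct (in_dec Nat.eq_dec j H0).
      - split; auto. intros _; split; auto. specialize (Bd j i); lia.
      - split; [intros [_ X]; discriminate|tauto]. }
    exists (filter g (seq 0 n)). split; [apply filter_subseqs|].
    assert (ND1: NoDup (filter g (seq 0 n))) by (apply NoDup_filter, seq_NoDup).
    split; [|split].
    - split; auto. split.
      + apply Nat.le_antisymm.
        * rewrite <- Len. apply NoDup_incl_length; auto. intros j; apply GI.
        * rewrite <- Len. apply NoDup_incl_length; auto. intros j; apply GI.
      + intros i Hi. apply GI in Hi. auto.
    - apply GI; auto.
    - exists w. split; [|pose proof (Rmin_l e d); lra].
      intros i j Hi Hj Nj. apply GI in Hi. apply (Low i j Hi Hj). intro; apply Nj; apply GI; auto. }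
  destruct (pigeon _ P Mono All) as [H [_ PH]].
  destruct (PH 1 ltac:(lra)) as [K1 [K2 _]].
  exists H. split; auto. split; auto.
  intros e He. destruct (PH e He) as [_ [_ X]]. exact X.
Qed.

Theorem lemma4 (segs : nat -> segment) (n k i0 : nat)
  (Hnondeg : forall i, (i < n)%nat -> fst (segs i) <> snd (segs i))
  (Hdisj : forall i j, (i < n)%nat -> (j < n)%nat -> i <> j ->
            forall p, ~ (in_seg (segs i) p /\ in_seg (segs j) p))
  (Hk1 : (1 <= k)%nat) (Hkn : (k <= n - 1)%nat) (Hi0 : (i0 < n)%nat) :
  (forall p, in_seg (segs i0) p -> Vk_s segs n k i0 p) /\
  (forall x, Vk_s segs n k i0 x ->
     exists y, in_seg (segs i0) y /\
       forall z, on_seg x y z -> Vk_s segs n k i0 z).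
Proof.
  assert (Hkn' : (k <= n)%nat) by lia.
  assert (Part1 : forall p, in_seg (segs i0) p -> Vk_s segs n k i0 p).
  { intros p Hp. apply (key segs n k i0 Hdisj Hkn' Hi0 p []); [simpl; lia|].
    intros j Hj Nj _. rewrite (ds_zero p _ Hp).
    destruct (Rle_lt_or_eq_dec 0 _ (ds_nonneg p (segs j))) as [h|h]; auto.
    exfalso. apply (Hdisj i0 j Hi0 Hj (fun e => Nj (eq_sym e)) p). split; auto.
    apply ds_zero_inv; auto. }
  split; auto.
  intros x Hx. pose proof Hx as [H [[ND [Len Bd]] [I0 Cl]]].
  destruct (ds_att x (segs i0)) as [y [Hy Ey]].
  set (r := dist_seg x (segs i0)) in *.
  exists y; split; auto.
  assert (Far: forall j, (j < n)%nat -> ~ In j H -> r <= dist_seg x (segs j)).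
  { intros j Hj Nj. apply Rnot_lt_le; intro Lt.
    destruct (Cl ((r - dist_seg x (segs j))/2) ltac:(lra)) as [yy [Vyy Dyy]].
    pose proof (Vyy i0 j I0 Hj Nj).
    pose proof (ds_lip x yy (segs i0)). pose proof (ds_lip yy x (segs j)).
    rewrite (dist2_sym yy x) in *. unfold r in *. lra. }
  intros z [t [Ht Ez]].
  destruct (Req_dec t 0) as [T0|T0].
  { subst t. replace z with x; auto. rewrite Ez. destruct x; simpl; f_equal; ring. }
  assert (Ez' : z = lin x y t) by (rewrite Ez; reflexivity). rewrite Ez'.
  apply (key segs n k i0 Hdisj Hkn' Hi0 _ (remove Nat.eq_dec i0 H)).
  { rewrite <- Len. apply remove_length_lt; auto. }
  intros j Hj Nj0 NjL.
  assert (NjH: ~ In j H) by (intro X; apply NjL; apply in_in_remove; auto).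
  assert (B1: dist_seg (lin x y t) (segs i0) <= (1 - t) * r).
  { eapply Rle_trans. apply ds_le; eauto. rewrite dist_lin2 by lra. rewrite <- Ey. right; reflexivity. }
  apply Rnot_le_lt; intro Le.
  destruct (ds_att (lin x y t) (segs j)) as [q' [Hq' Eq']].
  assert (q' = y).
  { apply (rigid x y q' t r); [lra| symmetry; auto | |].
    - eapply Rle_trans. apply (Far j Hj NjH). apply ds_le; auto.
    - rewrite <- Eq'. lra. }
  subst q'. apply (Hdisj i0 j Hi0 Hj (fun e => Nj0 (eq_sym e)) y); auto.
Qed.
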